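(* The Hopf algebra $H_{\operatorname{NAP}}$ is a free commutative algebra on the elements $\mathsf{F}_{[t]}$ where $t$ runs over the unlabeled rooted trees whose root has exactly one child (root-valence $1$).
   Context: $\Pi_{\operatorname{NAP}}(I)$ is the set of forests of rooted trees with vertex set exactly $I$, ordered by: $y$ covers $x$ iff $y$ is obtained from $x$ by adding an edge from the root of one component of $x$ to the root of another component (the latter root remaining the root); $\widehat{0}$ is the forest of one-vertex trees. For a rooted tree $t$ on $I$, $[\widehat{0},t]$ is an interval in $\Pi_{\operatorname{NAP}}(I)$, whose isomorphism class depends only on the unlabeled tree underlying $t$. $H_{\operatorname{NAP}}$ is the incidence Hopf algebra (Schmitt's construction) of this family: it has a basis $\mathsf{F}_{[Q]}$ indexed by isomorphism classes of finite products $Q$ of posets $[\widehat{0},t]$ ($t$ rooted trees), product $\mathsf{F}_{[Q]}\mathsf{F}_{[Q']}=\mathsf{F}_{[Q\times Q']}$, unit the class of the one-element poset, coproduct $\Delta\mathsf{F}_{[Q]}=\sum_{x\in Q}\mathsf{F}_{[\widehat{0},x]}\otimes\mathsf{F}_{[x,\widehat{1}]}$. We write $\mathsf{F}_{[t]}=\mathsf{F}_{[[\widehat{0},t]]}$. *)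

(* Defs.v *)
From HB Require Import structures.
From mathcomp Require Import all_boot.
Set Implicit Arguments. Unset Strict Implicit. Unset Printing Implicit Defensive.

(** * Rooted forests on the vertex set 'I_n, encoded by parent functions.
    [x i = None] means that [i] is a root; [x i = Some j] means that [j] is the
    parent of [i]. *)

Definition pfun (n : nat) := {ffun 'I_n -> option 'I_n}.

Definition is_forest n (x : pfun n) : bool :=
  [forall i : 'I_n, iter n (obind (fun j => x j)) (Some i) == None].

Definition nap0 n : pfun n := [ffun _ => None].

(** covering relation of Pi_NAP('I_n): y is obtained from the forest x by
    adding an edge from the root r1 of one component to the root r2 of another
    component (r2 remaining the root). *)
Definition nap_cover n (x y : pfun n) : bool :=
  is_forest x &&
  [exists r1 : 'I_n, exists r2 : 'I_n,
     [&& r1 != r2, x r1 == None, x r2 == None &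
         y == [ffun i => if i == r1 then Some r2 else x i]]].

Definition nap_le n : rel (pfun n) := connect (@nap_cover n).

Record rtree := RTree { rt_n : nat; rt_par : pfun rt_n }.

Definition is_rtree (t : rtree) : bool :=
  is_forest (rt_par t) && (#|[set i | rt_par t i == None]| == 1).

Definition root_valence1 (t : rtree) : bool :=
  [exists r : 'I_(rt_n t),
     (rt_par t r == None) && (#|[set i | rt_par t i == Some r]| == 1)].

(** isomorphism of rooted trees (i.e. equality of the underlying unlabeled trees) *)
Definition tree_iso (t1 t2 : rtree) : Prop :=
  exists f : 'I_(rt_n t1) -> 'I_(rt_n t2),
    bijective f /\ forall i, rt_par t2 (f i) = omap f (rt_par t1 i).

Definition dummy_tree : rtree := @RTree 0 [ffun i => None].

Record fposet := FPoset { fp_car : finType; fp_le : rel fp_car }.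

Definition fposet_iso (P Q : fposet) : Prop :=
  exists f : fp_car P -> fp_car Q,
    bijective f /\ forall x y, fp_le x y = fp_le (f x) (f y).

Definition fposet_unit : fposet := @FPoset unit (fun _ _ => true).

Definition fposet_prod (P Q : fposet) : fposet :=
  @FPoset (fp_car P * fp_car Q)%type
          (fun a b => fp_le a.1 b.1 && fp_le a.2 b.2).

Definition ival_car (t : rtree) :=
  {z : pfun (rt_n t) | nap_le (nap0 (rt_n t)) z && nap_le z (rt_par t)}.

Definition ival (t : rtree) : fposet :=
  @FPoset (ival_car t) (fun a b => nap_le (val a) (val b)).

Definition prod_ival (ts : seq rtree) : fposet :=
  foldr (fun t P => fposet_prod (ival t) P) fposet_unit ts.

(* Main.v *)
Require Import Defs.
From HB Require Import structures.
From mathcomp Require Import all_boot.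
From Stdlib Require Import ClassicalEpsilon.
Set Implicit Arguments. Unset Strict Implicit. Unset Printing Implicit Defensive.

Lemma iter_None (V : Type) (f : V -> option V) k : iter k (obind f) None = None.
Proof. by elim: k => //= k ->. Qed.

Lemma iter_ge (V : Type) (f : V -> option V) N M x :
  iter N (obind f) x = None -> N <= M -> iter M (obind f) x = None.
Proof. move=> h /subnK <-; by rewrite iterD h iter_None. Qed.

Lemma climb (V : Type) (f : V -> option V) (Q : V -> bool) N x :
  iter N (obind f) (Some x) = None -> Q x ->
  exists y, [/\ Q y, (exists k, iter k (obind f) (Some x) = Some y) &
                forall p, f y = Some p -> ~~ Q p].
Proof.
elim: N x => [//|N IH] x hN Qx.
case hx: (f x) => [p|]; last first.
  by exists x; split=> //; [exists 0 | move=> p; rewrite hx].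
case Qp: (Q p); last by exists x; split=> //; [exists 0|move=> q; rewrite hx => -[<-]; rewrite Qp].
have hp : iter N (obind f) (Some p) = None by rewrite -hx -hN iterSr.
have [y [Qy [k hk] hy]] := IH p hp Qp.
by exists y; split=> //; exists k.+1; rewrite iterSr /= hx.
Qed.

Lemma sub_iter n (x t : pfun n) : (forall i, x i = None \/ x i = t i) ->
  forall k y, iter k (obind x) y = None \/ iter k (obind x) y = iter k (obind t) y.
Proof.
move=> hs; elim=> [|k IH] y /=; first by right.
case: (IH y) => ->; first by left.
case: (iter k (obind t) y) => [v|] /=; last by left.
exact: hs.
Qed.

Lemma sub_forest n (x t : pfun n) : (forall i, x i = None \/ x i = t i) ->
  is_forest t -> is_forest x.
Proof.
move=> hs /forallP ht; apply/forallP=> i.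
by case: (sub_iter hs n (Some i)) => ->.
Qed.

Lemma cover_ext n (x y : pfun n) : nap_cover x y -> forall i p, x i = Some p -> y i = Some p.
Proof.
move=> /andP[_ /existsP[r1 /existsP[r2 /and4P[_ hr1 _ /eqP->]]]] i p hi.
rewrite ffunE; case: eqP => [e|//]; subst; by rewrite (eqP hr1) in hi.
Qed.

Lemma cover_cl n (x y : pfun n) : nap_cover x y ->
  forall i p, x p != None -> y i = Some p -> x i = Some p.
Proof.
move=> /andP[_ /existsP[r1 /existsP[r2 /and4P[_ hr1 hr2 /eqP->]]]] i p hp.
rewrite ffunE; case: eqP => [e [e2]|//]; subst; by rewrite (eqP hr2) in hp.
Qed.

Lemma le_ext n (x y : pfun n) : nap_le x y -> forall i p, x i = Some p -> y i = Some p.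
Proof.
case/connectP=> s; elim: s x => [|z s IH] x /=; first by move=> _ ->.
move=> /andP[c pth] e i p h; apply: (IH z pth e); exact: cover_ext c _ _ h.
Qed.

Lemma le_cl n (x y : pfun n) : nap_le x y ->
  forall i p, x p != None -> y i = Some p -> x i = Some p.
Proof.
case/connectP=> s; elim: s x => [|z s IH] x /=; first by move=> _ -> i p _ ->.
move=> /andP[c pth] e i p hp hy.
have hz : z p != None by move: hp; case ex: (x p) => [a|] // _; rewrite (cover_ext c ex).
exact: (cover_cl c hp (IH z pth e i p hz hy)).
Qed.

Lemma le_build n (t z z' : pfun n) : is_forest t ->
  (forall i, z i = None \/ z i = t i) ->
  (forall i p, t i = Some p -> z p != None -> z i != None) ->
  (forall i, z' i = None \/ z' i = t i) ->
  (forall i, z i != None -> z' i != None) -> nap_le z z'.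
Proof.
move=> tf hz hcl.
have [k] := ubnP #|[set i | (z i == None) && (z' i != None)]|.
elim: k z' => // k IH z' hk hz' hinc.
set D := [set i | _] in hk.
case: (set_0Vmem D) => [D0 | [i iD]].
  have -> : z' = z; last exact: connect0.
  apply/ffunP=> j; case: (hz j) => hj.
    case: (z' j =P None) => [->|/eqP nz]; first by rewrite hj.
    have : j \in D by rewrite inE hj eqxx nz.
    by rewrite D0 inE.
  case: (hz' j) => hj'; last by rewrite hj hj'.
  by move: (hinc j); rewrite hj' hj; case: (t j) hj => // a _; move/(_ isT).
have tfi : iter n (obind t) (Some i) = None by move/forallP: tf => /(_ i) /eqP.
have [i0 [Di0 _ htop]] := @climb _ _ (fun j => j \in D) _ _ tfi iD.
move: Di0; rewrite inE => /andP[/eqP zi0 z'i0].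
have [p tp] : exists p, t i0 = Some p.
  by case: (hz' i0) z'i0 => ->; [rewrite eqxx | case: (t i0) => // a; exists a].
have z'i0p : z' i0 = Some p by case: (hz' i0) z'i0 => ->; rewrite ?eqxx ?tp.
have z'p : z' p = None.
  move: (htop p tp); rewrite inE negb_and negbK => /orP[zp|/eqP //].
  by move: (hcl i0 p tp zp); rewrite zi0.
have pi0 : i0 != p by apply/eqP=> e; subst; rewrite z'p in z'i0p.
set z'' : pfun n := [ffun j => if j == i0 then None else z' j].
have hz'' : forall j, z'' j = None \/ z'' j = t j.
  by move=> j; rewrite ffunE; case: eqP => _; [left | exact: hz'].
rewrite /nap_le; apply: (@connect_trans _ _ z''); last first.
  apply: connect1; apply/andP; split; first exact: sub_forest hz'' tf.
  apply/existsP; exists i0; apply/existsP; exists p.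
  rewrite pi0 !ffunE eqxx /=.
  have -> : (p == i0) = false by rewrite eq_sym (negbTE pi0).
  rewrite z'p eqxx /=.
  apply/eqP/ffunP=> j; rewrite !ffunE; case: eqP => [->//|_]; by [].
apply: IH => //.
- rewrite -ltnS; apply: leq_trans hk.
  rewrite (cardsD1 i0 D) inE zi0 eqxx z'i0 add1n ltnS; apply: subset_leq_card.
  apply/subsetP=> j; rewrite !inE ffunE; case: (j =P i0) => [_|_ /=]; by rewrite ?andbF.
- move=> j nz; rewrite ffunE; case: (j =P i0) => [e|_]; last exact: hinc.
  by subst; rewrite zi0 in nz.
Qed.

Lemma iso_of (P Q : fposet) (f : fp_car P -> fp_car Q) (g : fp_car Q -> fp_car P) :
  cancel f g -> cancel g f -> (forall x y, fp_le x y = fp_le (f x) (f y)) ->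
  fposet_iso P Q.
Proof. by move=> fg gf h; exists f; split=> //; exact: Bijective fg gf. Qed.

Lemma iso_refl P : fposet_iso P P.
Proof. by exists id; split=> //; exact: Bijective (fun x => erefl) (fun x => erefl). Qed.

Lemma iso_sym P Q : fposet_iso P Q -> fposet_iso Q P.
Proof.
case=> f [[g fg gf] h]; exists g; split; first exact: Bijective gf fg.
by move=> x y; rewrite h !gf.
Qed.

Lemma iso_trans P Q R : fposet_iso P Q -> fposet_iso Q R -> fposet_iso P R.
Proof.
case=> f [[f' ff' f'f] hf]; case=> g [[g' gg' g'g] hg].
exists (g \o f); split; last by move=> x y /=; rewrite hf hg.
by apply: (Bijective (g := f' \o g')) => x /=; rewrite ?gg' ?ff' ?g'g ?f'f.
Qed.

Lemma iso_prod P P' Q Q' : fposet_iso P P' -> fposet_iso Q Q' ->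
  fposet_iso (fposet_prod P Q) (fposet_prod P' Q').
Proof.
case=> f [[f' ff' f'f] hf]; case=> g [[g' gg' g'g] hg].
apply: (@iso_of (fposet_prod P Q) (fposet_prod P' Q') (fun a => (f a.1, g a.2)) (fun a => (f' a.1, g' a.2))).
- by case=> a b /=; rewrite ff' gg'.
- by case=> a b /=; rewrite f'f g'g.
- by case=> a b [c d] /=; rewrite hf hg.
Qed.

Lemma iso_prod_unit P : fposet_iso P (fposet_prod P fposet_unit).
Proof.
apply: (@iso_of P (fposet_prod P fposet_unit) (fun a => (a, tt)) (fun a => a.1)) => //.
- by case=> a [].
- by move=> x y /=; rewrite andbT.
Qed.

Lemma iso_unit_prod P : fposet_iso P (fposet_prod fposet_unit P).
Proof.
apply: (@iso_of P (fposet_prod fposet_unit P) (fun a => (tt, a)) (fun a => a.2)) => //.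
by case=> [[] a].
Qed.

Lemma iso_assoc P Q R : fposet_iso (fposet_prod (fposet_prod P Q) R) (fposet_prod P (fposet_prod Q R)).
Proof.
apply: (@iso_of (fposet_prod (fposet_prod P Q) R) (fposet_prod P (fposet_prod Q R))
   (fun a => (a.1.1, (a.1.2, a.2))) (fun a => ((a.1, a.2.1), a.2.2))).
- by case=> [[a b] c].
- by case=> [a [b c]].
- by case=> [[a b] c] [[a' b'] c'] /=; rewrite andbA.
Qed.

Lemma prod_ival_cat a b :
  fposet_iso (prod_ival (a ++ b)) (fposet_prod (prod_ival a) (prod_ival b)).
Proof.
elim: a => [|t a IH] /=; first exact: iso_unit_prod.
apply: iso_trans (iso_sym (iso_assoc _ _ _)).
exact: iso_prod (iso_refl _) IH.
Qed.

(** ** lattices of closed sets of a forest *)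
Definition closedb (V : finType) (par : V -> option V) (S : {set V}) : bool :=
  [forall i, (i \in S) ==> (par i != None)] &&
  [forall i, forall p, (par i == Some p) ==> (p \in S) ==> (i \in S)].

Definition DL (V : finType) (par : V -> option V) : fposet :=
  @FPoset {S : {set V} | closedb par S} (fun a b => val a \subset val b).

Lemma closedP (V : finType) (par : V -> option V) (S : {set V}) :
  reflect ((forall i, i \in S -> par i != None) /\
           (forall i p, par i = Some p -> p \in S -> i \in S)) (closedb par S).
Proof.
apply: (iffP andP) => [[/forallP h1 /forallP h2]|[h1 h2]]; split.
- by move=> i; move/implyP: (h1 i).
- by move=> i p e; move/forallP: (h2 i) => /(_ p) /implyP; rewrite e eqxx => /(_ isT) /implyP.
- by apply/forallP=> i; apply/implyP; exact: h1.
- apply/forallP=> i; apply/forallP=> p; apply/implyP=> /eqP e; apply/implyP; exact: h2.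
Qed.

(** ** the interval [0,t] is the lattice of closed sets *)
Lemma ival_sub (t : rtree) (z : pfun (rt_n t)) : nap_le z (rt_par t) ->
  forall i, z i = None \/ z i = rt_par t i.
Proof.
move=> h i; case e: (z i) => [p|]; last by left.
by right; rewrite (le_ext h e).
Qed.

Lemma ival_cl (t : rtree) (z : pfun (rt_n t)) : nap_le z (rt_par t) ->
  forall i p, rt_par t i = Some p -> z p != None -> z i != None.
Proof. by move=> h i p e zp; rewrite (le_cl h zp e). Qed.

Lemma iv2dl_proof (t : rtree) (z : ival_car t) :
  closedb (rt_par t) [set i | sval z i != None].
Proof.
case: z => z /= /andP[_ h]; apply/closedP; split=> [i|i p e].
  by rewrite inE; case: (ival_sub h i) => ->; rewrite ?eqxx.
by rewrite !inE; exact: ival_cl h i p e.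
Qed.

Definition iv2dl (t : rtree) (z : ival_car t) : fp_car (DL (rt_par t)) :=
  exist (closedb (rt_par t)) _ (iv2dl_proof z).

Lemma dl2iv_proof (t : rtree) (ht : is_forest (rt_par t)) (S : fp_car (DL (rt_par t))) :
  let z : pfun (rt_n t) := [ffun i => if i \in sval S then rt_par t i else None] in
  nap_le (nap0 (rt_n t)) z && nap_le z (rt_par t).
Proof.
case: S => S /= /closedP [h1 h2].
have zs : forall i, [ffun i => if i \in S then rt_par t i else None] i = None \/
        [ffun i => if i \in S then rt_par t i else None] i = rt_par t i.
  by move=> i; rewrite ffunE; case: ifP; [right|left].
apply/andP; split.
- apply: le_build ht _ _ zs _ => [i|i p _|i]; rewrite ffunE ?eqxx //; by left.
- apply: le_build ht zs _ _ _ => [i p e|i|//].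
  + rewrite !ffunE; case: ifP => // pS _; rewrite (h2 i p e pS) e //.
  + by right.
  + by move=> i; rewrite ffunE; case: ifP.
Qed.

Definition dl2iv (t : rtree) (ht : is_forest (rt_par t)) (S : fp_car (DL (rt_par t))) :
  ival_car t := @exist _ (fun z : pfun (rt_n t) => nap_le (nap0 (rt_n t)) z && nap_le z (rt_par t)) _ (dl2iv_proof ht S).

Lemma ival_DL (t : rtree) : is_forest (rt_par t) -> fposet_iso (ival t) (DL (rt_par t)).
Proof.
move=> ht; apply: (@iso_of (ival t) (DL (rt_par t)) (@iv2dl t) (dl2iv ht)).
- case=> z hz; apply: val_inj => /=; apply/ffunP=> i; rewrite ffunE inE.
  move/andP: (hz) => [_ h].
  by case: (ival_sub h i) => ->; rewrite ?eqxx // ; case: (rt_par t i).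
- case=> S hS; apply: val_inj => /=; apply/setP=> i; rewrite inE ffunE.
  case: ifP => // iS; move/closedP: hS => [h1 _]; exact: h1.
- case=> z hz [z' hz'] /=.
  move/andP: hz => [_ h]; move/andP: hz' => [_ h'].
  apply/idP/subsetP => [le i|sub].
    rewrite !inE; case e: (z i) => [p|] // _; by rewrite (le_ext le e).
  apply: le_build ht (ival_sub h) (ival_cl h) (ival_sub h') _ => i nz.
  by have := sub i; rewrite !inE; apply.
Qed.

Lemma DL_map (W V : finType) (pW : W -> option W) (pV : V -> option V) (g : W -> V) :
  (forall x, pV (g x) = omap g (pW x)) ->
  (forall x y, pW x != None -> pW y != None -> g x = g y -> x = y) ->
  (forall v, pV v != None -> exists x, g x = v) ->
  fposet_iso (DL pW) (DL pV).
Proof.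
move=> hpar hinj hsurj.
have nrg : forall x, (pV (g x) != None) = (pW x != None) by move=> x; rewrite hpar; case: (pW x).
have Fp : forall S : fp_car (DL pW), closedb pV (g @: sval S).
  case=> S /= /closedP [h1 h2]; apply/closedP; split.
    by move=> i /imsetP [x xS ->]; rewrite nrg; exact: h1.
  move=> i p e /imsetP [x xS ex].
  have [y gy] : exists y, g y = i by apply: hsurj; rewrite e.
  move: e; rewrite -gy hpar; case ey: (pW y) => [q|] //= [gq].
  have nq : pW q != None by rewrite -nrg gq ex nrg; exact: h1.
  have qx : q = x by apply: hinj => //; [exact: h1 | rewrite gq].
  subst q; by rewrite imset_f // (h2 y x ey xS).
have Gp : forall S : fp_car (DL pV), closedb pW [set x | (pW x != None) && (g x \in sval S)].
  case=> S /= /closedP [h1 h2]; apply/closedP; split.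
    by move=> i; rewrite inE => /andP [].
  move=> i p e; rewrite !inE => /andP [_ gp]; rewrite e /=.
  by apply: (h2 _ (g p)) => //; rewrite hpar e.
apply: (@iso_of (DL pW) (DL pV) (fun S => exist (closedb pV) _ (Fp S)) (fun S => exist (closedb pW) _ (Gp S))).
- case=> S hS; apply: val_inj => /=; apply/setP=> x; rewrite inE.
  move/closedP: (hS) => [h1 _].
  apply/andP/idP => [[nx /imsetP [y yS gxy]]|xS].
    by rewrite (hinj x y nx (h1 _ yS) gxy).
  by split; [exact: h1 | exact: imset_f].
- case=> S hS; apply: val_inj => /=; apply/setP=> v.
  move/closedP: (hS) => [h1 _].
  apply/imsetP/idP => [[x]|vS]; first by rewrite inE => /andP [_ h] ->.
  have [x gx] := hsurj v (h1 _ vS); exists x => //; rewrite inE gx vS andbT.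
  by rewrite -nrg gx; exact: h1.
- case=> S hS [T hT] /=; apply/idP/idP; first exact: imsetS.
  move/closedP: hS => [h1 _]; move/closedP: hT => [k1 _].
  move=> /subsetP sub; apply/subsetP=> x xS.
  have /imsetP [y yT gxy] := sub _ (imset_f g xS).
  by rewrite (hinj x y (h1 _ xS) (k1 _ yT) gxy).
Qed.

Definition sum_par (V1 V2 : finType) (p1 : V1 -> option V1) (p2 : V2 -> option V2)
  (v : V1 + V2) : option (V1 + V2) :=
  match v with inl x => omap inl (p1 x) | inr y => omap inr (p2 y) end.

Lemma DL_prod (V1 V2 : finType) (p1 : V1 -> option V1) (p2 : V2 -> option V2) :
  fposet_iso (fposet_prod (DL p1) (DL p2)) (DL (sum_par p1 p2)).
Proof.
have Fp : forall S : fp_car (DL p1) * fp_car (DL p2),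
   closedb (sum_par p1 p2) [set v | match v with inl x => x \in sval S.1 | inr y => y \in sval S.2 end].
  case=> [[S1 h1] [S2 h2]] /=; have /closedP [a1 b1] := h1; have /closedP [a2 b2] := h2.
  apply/closedP; split.
    by case=> [x|y]; rewrite inE /= => h; [move: (a1 _ h) | move: (a2 _ h)]; case: (_ x) || case: (_ y).
  case=> [x|y] [p|q]; rewrite !inE /=.
  - by case e: (p1 x) => [a|] //= [<-]; exact: b1 e.
  - by case: (p1 x).
  - by case: (p2 y).
  - by case e: (p2 y) => [a|] //= [<-]; exact: b2 e.
have Gp1 : forall S : fp_car (DL (sum_par p1 p2)), closedb p1 [set x | inl x \in sval S].
  case=> S hS; have /closedP [a b] := hS; apply/closedP; split=> [i|i p e]; rewrite !inE /=.
    by move/a => /=; case: (p1 i).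
  by apply: b; rewrite /= e.
have Gp2 : forall S : fp_car (DL (sum_par p1 p2)), closedb p2 [set x | inr x \in sval S].
  case=> S hS; have /closedP [a b] := hS; apply/closedP; split=> [i|i p e]; rewrite !inE /=.
    by move/a => /=; case: (p2 i).
  by apply: b; rewrite /= e.
apply: (@iso_of (fposet_prod (DL p1) (DL p2)) (DL (sum_par p1 p2))
  (fun S => exist (closedb (sum_par p1 p2)) _ (Fp S)) (fun S => (exist (closedb p1) _ (Gp1 S), exist (closedb p2) _ (Gp2 S)))).
- case=> [[S1 h1] [S2 h2]]; congr pair; apply: val_inj; apply/setP=> x; by rewrite !inE.
- case=> S h; apply: val_inj; apply/setP=> [[x|y]]; by rewrite !inE.
- case=> [[S1 h1] [S2 h2]] [[T1 k1] [T2 k2]] /=.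
  apply/andP/subsetP => [[/subsetP s1 /subsetP s2] [x|y]|s]; rewrite ?inE.
  + exact: s1.
  + exact: s2.
  + by split; apply/subsetP=> z zS; [have := s (inl z) | have := s (inr z)]; rewrite !inE; apply.
Qed.

Lemma DL_unit (V : finType) (p : V -> option V) : (forall v, p v = None) ->
  fposet_iso fposet_unit (DL p).
Proof.
move=> h.
have c0 : closedb p set0 by apply/closedP; split=> [i|i q]; rewrite ?inE // h.
apply: (@iso_of fposet_unit (DL p) (fun _ => exist (closedb p) _ c0) (fun _ => tt)) => //.
- by case.
- case=> S hS; have /closedP [a _] := hS; apply: val_inj => /=; apply/setP=> x; rewrite inE.
  by apply/esym/negbTE; apply/negP=> /a; rewrite h.
- by move=> x y /=; rewrite sub0set.
Qed.

Definition FT (us : seq rtree) (i : 'I_(size us)) : finType := 'I_(rt_n (nth dummy_tree us i)).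
Definition FV (us : seq rtree) : finType := {i : 'I_(size us) & FT i}.
Definition FP (us : seq rtree) (v : FV us) : option (FV us) :=
  omap (fun y => @Tagged _ (tag v) (@FT us) y) (rt_par (nth dummy_tree us (tag v)) (tagged v)).

Definition liftS (t : rtree) (ts : seq rtree) (i : 'I_(size ts)) : 'I_(size (t :: ts)) :=
  @Ordinal (size ts).+1 i.+1 (ltn_ord i).

Definition gcons (t : rtree) (ts : seq rtree) (w : 'I_(rt_n t) + FV ts) : FV (t :: ts) :=
  match w with
  | inl x => @Tagged _ ord0 (@FT (t :: ts)) x
  | inr v => @Tagged _ (liftS t (tag v)) (@FT (t :: ts)) (tagged v)
  end.

Lemma tagged_inj (I : eqType) (T_ : I -> Type) (i : I) (x y : T_ i) :
  Tagged T_ x = Tagged T_ y -> x = y.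
Proof.
move=> e; have := congr1 (tagged_as (Tagged T_ x)) e.
by rewrite !tagged_asE.
Qed.

Lemma prod_DL (us : seq rtree) : all (fun t => is_forest (rt_par t)) us ->
  fposet_iso (prod_ival us) (DL (@FP us)).
Proof.
elim: us => [|t ts IH] /=.
  by move=> _; apply: DL_unit => [[[i hi]]].
move=> /andP [ht hts].
apply: iso_trans (iso_prod (ival_DL ht) (IH hts)) _.
apply: iso_trans (DL_prod _ _) _.
apply: (@DL_map _ _ _ _ (@gcons t ts)).
- case=> [x|[i y]] /=; rewrite /FP /=.
    by case: (rt_par t x).
  by case: (rt_par (nth dummy_tree ts i) y).
- case=> [x|[i y]] [x'|[i' y']] _ _ /= e.
  + by rewrite (tagged_inj e).
  + by have := congr1 (fun v => val (tag v)) e.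
  + by have := congr1 (fun v => val (tag v)) e.
  + have ii' : i = i' by apply: val_inj; have := congr1 (fun v => val (tag v)) e => /= -[].
    subst i'; by rewrite (tagged_inj e).
- case=> [[[|m] Hm] y] _.
    move: y; rewrite (bool_irrelevance Hm (ltn0Sn _)) => y.
    by exists (inl y).
  have Hm' : m < size ts by [].
  exists (inr (@Tagged _ (Ordinal Hm') (@FT ts) y)) => /=.
  rewrite /liftS /=.
  move: y; rewrite (bool_irrelevance (ltn_ord (Ordinal Hm')) Hm) => y //.
Qed.

Lemma iter_card (V : finType) (f : V -> option V) x N :
  iter N (obind f) (Some x) = None -> iter #|V| (obind f) (Some x) = None.
Proof.
move=> hN; case e: (iter #|V| (obind f) (Some x)) => [y|] //.
have allS : forall k, k <= #|V| -> iter k (obind f) (Some x) != None.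
  move=> k hk; apply/negP=> /eqP h; by rewrite (iter_ge h hk) in e.
pose g (k : 'I_#|V|.+1) := odflt x (iter k (obind f) (Some x)).
have : ~~ injectiveb g by apply/negP=> /injectiveP /leq_card; rewrite card_ord ltnn.
move/injectivePn => [i [j nij gij]].
have gE : forall k : 'I_#|V|.+1, iter k (obind f) (Some x) = Some (g k).
  move=> k; rewrite /g; have := allS k; rewrite -ltnS ltn_ord => /(_ isT).
  by case: (iter _ _ _).
wlog lt : i j nij gij / i < j.
  move=> H; case: (ltngtP i j) => [h|h|h]; first exact: (H i j nij gij h).
    by apply: (H j i) => //; rewrite eq_sym.
  by move: nij; rewrite (val_inj h) eqxx.
have eqij : iter i (obind f) (Some x) = iter j (obind f) (Some x) by rewrite !gE gij.
have per : forall m, iter (i + m * (j - i)) (obind f) (Some x) = iter i (obind f) (Some x).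
  elim=> [|m IH]; first by rewrite mul0n addn0.
  rewrite mulSn addnCA iterD IH -iterD subnK ?eqij //; exact: ltnW.
have hle : N <= i + N * (j - i).
  by apply: leq_trans (leq_addl i _); rewrite leq_pmulr // subn_gt0.
have := per N; rewrite (iter_ge hN hle) gE; congruence.
Qed.

Definition realize (V : finType) (p : V -> option V) : rtree :=
  @RTree #|V| [ffun k => omap enum_rank (p (enum_val k))].

Lemma realize_iter (V : finType) (p : V -> option V) k (i : 'I_#|V|) :
  iter k (obind (rt_par (realize p))) (Some i) = omap enum_rank (iter k (obind p) (Some (enum_val i))).
Proof.
elim: k => [|k IH] /=; first by rewrite enum_valK.
rewrite IH; case: (iter k (obind p) (Some (enum_val i))) => //= v.
by rewrite ffunE enum_rankK.
Qed.

Lemma realize_forest (V : finType) (p : V -> option V) :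
  (forall v, iter #|V| (obind p) (Some v) = None) -> is_forest (rt_par (realize p)).
Proof.
move=> h; apply/forallP=> i /=.
by rewrite -/(rt_par (realize p)) realize_iter h.
Qed.

Lemma realize_card (V : finType) (p : V -> option V) (o : option V) :
  #|[set i | rt_par (realize p) i == omap enum_rank o]| = #|[set v | p v == o]|.
Proof.
have -> : [set i | rt_par (realize p) i == omap enum_rank o] = enum_rank @: [set v | p v == o].
  apply/setP=> i; rewrite inE ffunE.
  apply/idP/imsetP => [/eqP e|[v]].
    exists (enum_val i); last by rewrite enum_valK.
    rewrite inE; apply/eqP; case: (p (enum_val i)) e; case: o => //.
      by move=> a b [/enum_rank_inj ->].
  rewrite inE => /eqP <- ->; by rewrite enum_rankK.
by rewrite card_imset //; exact: enum_rank_inj.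
Qed.

Lemma realize_DL (V : finType) (p : V -> option V) :
  fposet_iso (DL (rt_par (realize p))) (DL p).
Proof.
apply: (@DL_map _ _ _ _ enum_val).
- by move=> x /=; rewrite ffunE; case: (p (enum_val x)) => //= v; rewrite enum_rankK.
- by move=> x y _ _; exact: enum_val_inj.
- by move=> v _; exists (enum_rank v); rewrite enum_rankK.
Qed.

Lemma realize_rtree (V : finType) (p : V -> option V) :
  (forall v, iter #|V| (obind p) (Some v) = None) -> #|[set v | p v == None]| = 1 ->
  is_rtree (realize p).
Proof.
move=> hf hr; rewrite /is_rtree realize_forest //=.
by rewrite -[None](@erefl _ (omap enum_rank None)) realize_card hr.
Qed.

Lemma realize_rv1 (V : finType) (p : V -> option V) r :
  p r = None -> #|[set v | p v == Some r]| = 1 -> root_valence1 (realize p).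
Proof.
move=> hr hc; apply/existsP; exists (enum_rank r).
rewrite /= ffunE enum_rankK hr eqxx /=.
by rewrite -[Some (enum_rank r)](@erefl _ (omap enum_rank (Some r))) realize_card hc.
Qed.

Definition subpar (V : finType) (p : V -> option V) (B : {set V}) (x : {v | v \in B}) :
  option {v | v \in B} :=
  obind (fun q => @insub _ (fun v => v \in B) _ q) (p (val x)).
Arguments subpar [V] p B x.

Lemma subparE (V : finType) (p : V -> option V) (B : {set V}) (x : {v | v \in B}) :
  omap val (subpar p B x) = obind (fun q => if q \in B then Some q else None) (p (val x)).
Proof. by rewrite /subpar; case: (p (val x)) => //= q; case: insubP => [u -> <-|/negbTE ->]. Qed.

Lemma subpar_iter (V : finType) (p : V -> option V) (B : {set V}) k x :
  iter k (obind (subpar p B)) (Some x) = None \/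
  omap val (iter k (obind (subpar p B)) (Some x)) = iter k (obind p) (Some (val x)).
Proof.
elim: k => [|k IH] /=; first by right.
case: IH => [->|IH]; first by left.
case e: (iter k (obind (subpar p B)) (Some x)) IH => [y|] /= IH; last by left.
rewrite -IH /=; have := @subparE _ p B y.
case: (subpar p B y) => [z|] /=; last by left.
right; move: H; case: (p (val y)) => [q|] //=; case: ifP => //= _ -> //.
Qed.

Lemma subpar_forest (V : finType) (p : V -> option V) (B : {set V}) N :
  (forall v, iter N (obind p) (Some v) = None) ->
  forall x, iter #|{: {v | v \in B}}| (obind (subpar p B)) (Some x) = None.
Proof.
move=> h x; apply: (@iter_card _ _ _ N).
by case: (@subpar_iter _ p B N x) => // e; move: e; rewrite h; case: (iter _ _ _).
Qed.

Lemma card_subset (V : finType) (B : {set V}) : #|{: {v | v \in B}}| = #|B|.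
Proof. by rewrite card_sig; apply: eq_card. Qed.

(** ** splitting a tree at a child of the root *)
Lemma split_tree (t : rtree) (r c : 'I_(rt_n t)) : is_forest (rt_par t) ->
  rt_par t r = None -> (forall v, rt_par t v = None -> v = r) -> rt_par t c = Some r ->
  exists t1 t2, [/\ is_rtree t1, root_valence1 t1, is_rtree t2, rt_n t2 < rt_n t &
     fposet_iso (ival t) (fposet_prod (ival t1) (ival t2))].
Proof.
move=> hf hr hroot hc.
set n := rt_n t in r c hroot hr hc *.
pose par : 'I_(rt_n t) -> option 'I_(rt_n t) := rt_par t.
have fN : forall v, iter n (obind par) (Some v) = None by move=> v; move/forallP: hf => /(_ v) /eqP.
pose S1 := [set v | [exists k : 'I_n, iter k (obind par) (Some v) == Some c]].
have S1P : forall v, reflect (exists k, iter k (obind par) (Some v) = Some c) (v \in S1).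
  move=> v; rewrite inE; apply: (iffP existsP) => [[k /eqP e]|[k e]]; first by exists k.
  have hk : k < n.
    rewrite ltnNge; apply/negP=> hk; by rewrite (iter_ge (fN v) hk) in e.
  by exists (Ordinal hk); rewrite e.
have rc : r != c by apply/eqP=> e; rewrite e hc in hr.
have cS1 : c \in S1 by apply/S1P; exists 0.
have iter_r : forall k, iter k.+1 (obind par) (Some r) = None.
  by move=> k; rewrite iterSr /= /par hr iter_None.
have rS1 : r \notin S1.
  apply/negP=> /S1P [[|k]]; first by move=> [e]; rewrite e eqxx in rc.
  by rewrite iter_r.
have clos1 : forall x p, x \in S1 -> par x = Some p -> p \in r |: S1.
  move=> x p /S1P [[|k]].
    by move=> [->] e; rewrite /par hc in e; case: e => <-; rewrite setU11.
  rewrite iterSr /= => e ep; rewrite ep /= in e.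
  by rewrite in_setU1; apply/orP; right; apply/S1P; exists k.
have clos2 : forall y p, y \notin S1 -> par y = Some p -> p \notin S1.
  move=> y p yS ep; apply/negP=> /S1P [k e]; move/negP: yS; apply; apply/S1P.
  by exists k.+1; rewrite iterSr /= ep.
pose B1 := r |: S1; pose B2 := ~: S1.
pose par1 := subpar par B1; pose par2 := subpar par B2.
have p1E : forall x : {v | v \in B1}, omap val (par1 x) = par (val x).
  move=> [x xB] /=; rewrite subparE /=.
  case e: (par x) => [q|] //=; move: xB; rewrite in_setU1 => /orP [/eqP ex|xS].
    by rewrite ex /par hr in e.
  by rewrite (clos1 x q xS e).
have p2E : forall x : {v | v \in B2}, omap val (par2 x) = par (val x).
  move=> [x xB] /=; rewrite subparE /=.
  case e: (par x) => [q|] //=; move: xB; rewrite in_setC => xS.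
  by rewrite in_setC (clos2 x q xS e).
pose t1 := realize par1; pose t2 := realize par2.
have rB1 : r \in B1 by rewrite setU11.
have cB1 : c \in B1 by rewrite in_setU1 cS1 orbT.
have rB2 : r \in B2 by rewrite in_setC.
exists t1, t2; split.
- apply: realize_rtree; first exact: subpar_forest fN.
  apply/eqP/cards1P; exists (exist _ r rB1); apply/setP=> x; rewrite !inE.
  apply/eqP/eqP => [e|->]; last by case e: (par1 _) (p1E (exist _ r rB1)) => [a|] //=; rewrite /par hr.
  apply: val_inj => /=; apply: hroot; by move: (p1E x); rewrite e /par => <-.
- apply: (@realize_rv1 _ _ (exist _ r rB1)).
    by case e: (par1 _) (p1E (exist _ r rB1)) => [a|] //=; rewrite /par hr.
  apply/eqP/cards1P; exists (exist _ c cB1); apply/setP=> x; rewrite !inE.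
  apply/eqP/eqP => [e|->]; last first.
    apply: (inj_omap val_inj); by rewrite p1E /= /par hc.
  have pxr : par (val x) = Some r by rewrite -p1E e.
  apply: val_inj => /=; case: x e pxr => x xB /= _ pxr.
  have : x \in B1 := xB; rewrite in_setU1 => /orP [/eqP e|/S1P [[|k]]].
    by rewrite e /par hr in pxr.
    by move=> [].
  rewrite iterSr /= pxr; case: k => [[e]|k]; [by rewrite e eqxx in rc | by rewrite iter_r].
- apply: realize_rtree; first exact: subpar_forest fN.
  apply/eqP/cards1P; exists (exist _ r rB2); apply/setP=> x; rewrite !inE.
  apply/eqP/eqP => [e|->]; last first.
    by case e: (par2 _) (p2E (exist _ r rB2)) => [a|] //=; rewrite /par hr.
  apply: val_inj => /=; apply: hroot; by move: (p2E x); rewrite e /par => <-.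
- rewrite /t2 /= card_subset /B2.
  have h := cardsC S1; rewrite card_ord in h.
  apply: (@leq_trans (#|S1| + #|~: S1|)); last by rewrite h.
  rewrite -{1}[#|~: S1|]add0n ltn_add2r; apply/card_gt0P; by exists c.
- apply: iso_trans (ival_DL hf) _.
  apply: iso_trans _ (iso_prod (iso_sym (ival_DL _)) (iso_sym (ival_DL _))); last first.
  + exact: realize_forest (subpar_forest fN).
  + exact: realize_forest (subpar_forest fN).
  apply: iso_trans _ (iso_prod (iso_sym (realize_DL _)) (iso_sym (realize_DL _))).
  apply: iso_trans _ (iso_sym (DL_prod _ _)).
  apply: iso_sym.
  apply: (@DL_map _ _ _ _ (fun w => match w with inl x => val x | inr y => val y end)).
  + case=> [x|y] /=; [move: (p1E x) | move: (p2E y)]; rewrite /par => <-.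
      by case: (par1 x).
    by case: (par2 y).
  + case=> [x|y] [x'|y'] /=.
    * move=> _ _ e; congr inl; exact: val_inj.
    * move=> nx _ e; exfalso.
      have nx' : par (val x) != None by rewrite -p1E; move: nx; rewrite /=; case: (par1 x).
      case: x nx' e {nx} => x xB /= nx' e.
      have : x \in B1 := xB; rewrite in_setU1 => /orP [/eqP ex|xS]; first by rewrite ex /par hr in nx'.
      case: y' e => y yB /= e; have : y \in B2 := yB; by rewrite in_setC -e xS.
    * move=> _ nx e; exfalso.
      have nx' : par (val x') != None by rewrite -p1E; move: nx; rewrite /=; case: (par1 x').
      case: x' nx' e {nx} => x xB /= nx' e.
      have : x \in B1 := xB; rewrite in_setU1 => /orP [/eqP ex|xS]; first by rewrite ex /par hr in nx'.
      case: y e => y yB /= e; have : y \in B2 := yB; by rewrite in_setC e xS.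
    * move=> _ _ e; congr inr; exact: val_inj.
  + move=> v nv; case vS: (v \in S1).
      have vB : v \in B1 by rewrite in_setU1 vS orbT.
      by exists (inl (exist _ v vB)).
    have vB : v \in B2 by rewrite in_setC vS.
    by exists (inr (exist _ v vB)).
Qed.

Lemma part1_tree (t : rtree) : is_rtree t ->
  exists us, [/\ all is_rtree us, all root_valence1 us & fposet_iso (ival t) (prod_ival us)].
Proof.
have [N] := ubnP (rt_n t); elim: N t => // N IH t hN /andP [hf hr].
have [r hr'] := cards1P hr.
have rootE : forall v, (rt_par t v == None) = (v == r).
  by move=> v; rewrite -in_set1 -hr' inE.
have hr0 : rt_par t r = None by apply/eqP; rewrite rootE.
have hroot : forall v, rt_par t v = None -> v = r by move=> v /eqP; rewrite rootE => /eqP.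
case: (pickP (fun c => rt_par t c == Some r)) => [c /eqP hc | nochild].
  have [t1 [t2 [h1 v1 h2 lt iso]]] := split_tree hf hr0 hroot hc.
  have [us2 [a2 b2 iso2]] := IH t2 (leq_trans lt hN) h2.
  exists (t1 :: us2); split; rewrite /= ?h1 ?v1 //.
  exact: iso_trans iso (iso_prod (iso_refl _) iso2).
exists [::]; split=> //=.
apply: iso_trans (ival_DL hf) (iso_sym (DL_unit _)) => v.
case e: (rt_par t v) => [p|] //; exfalso.
have fN : iter (rt_n t) (obind (rt_par t)) (Some v) = None by move/forallP: hf => /(_ v) /eqP.
have nv : rt_par t v != None by rewrite e.
have [y [ny _ top]] := @climb _ _ (fun j => rt_par t j != None) _ _ fN nv.
move: ny; case ey: (rt_par t y) => [q|] // _.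
have := top q ey; rewrite negbK rootE => /eqP qr; subst q.
by move: (nochild y); rewrite /= ey eqxx.
Qed.

Lemma part1 (ts : seq rtree) : all is_rtree ts ->
  exists us, [/\ all is_rtree us, all root_valence1 us & fposet_iso (prod_ival ts) (prod_ival us)].
Proof.
elim: ts => [|t ts IH] /=; first by exists [::]; split=> //; exact: iso_refl.
move=> /andP [ht hts]; have [u [a b i]] := part1_tree ht; have [us [a' b' i']] := IH hts.
exists (u ++ us); rewrite !all_cat a b a' b'; split=> //.
exact: iso_trans (iso_prod i i') (iso_sym (prod_ival_cat _ _)).
Qed.

Definition reach (V : finType) (p : V -> option V) (x y : V) : Prop :=
  exists k, iter k (obind p) (Some x) = Some y.

Definition down (V : finType) (p : V -> option V) (m : V) : {set V} :=
  [set v | [exists k : 'I_#|V|, iter k (obind p) (Some v) == Some m]].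

Definition fforest (V : finType) (p : V -> option V) : Prop :=
  exists N, forall v, iter N (obind p) (Some v) = None.

Lemma downP (V : finType) (p : V -> option V) v m : fforest p ->
  (v \in down p m) <-> reach p v m.
Proof.
move=> [N hN]; rewrite inE; split => [/existsP [k /eqP e]|[k e]]; first by exists k.
apply/existsP.
have hk : k < #|V|.
  rewrite ltnNge; apply/negP=> hk; by rewrite (iter_ge (iter_card (hN v)) hk) in e.
by exists (Ordinal hk); rewrite e.
Qed.

Lemma reach_refl (V : finType) (p : V -> option V) x : reach p x x.
Proof. by exists 0. Qed.

Lemma reach_trans (V : finType) (p : V -> option V) x y z :
  reach p x y -> reach p y z -> reach p x z.
Proof. by move=> [k hk] [l hl]; exists (l + k); rewrite iterD hk. Qed.

Lemma reach_par (V : finType) (p : V -> option V) x y : p x = Some y -> reach p x y.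
Proof. by move=> e; exists 1. Qed.

Lemma reach_inv (V : finType) (p : V -> option V) x y : reach p x y ->
  x = y \/ exists2 q, p x = Some q & reach p q y.
Proof.
case=> [[|k]]; first by move=> [->]; left.
rewrite iterSr /=; case: (p x) => [q|] /= e; first by right; exists q => //; exists k.
by rewrite iter_None in e.
Qed.

Lemma reach_antisym (V : finType) (p : V -> option V) x y : fforest p ->
  reach p x y -> reach p y x -> x = y.
Proof.
move=> [N hN] [k hk] [l hl]; case: k hk => [[]//|k] hk.
have cyc : iter (l + k.+1) (obind p) (Some x) = Some x by rewrite iterD hk.
have per : forall m, iter (m * (l + k.+1)) (obind p) (Some x) = Some x.
  by elim=> [|m IH] //; rewrite mulSn iterD IH.
have := per N; rewrite (@iter_ge _ _ N) ?hN //.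
by rewrite leq_pmulr // addnS.
Qed.

Lemma reach_nonroot (V : finType) (p : V -> option V) v m :
  reach p v m -> p m != None -> p v != None.
Proof.
case=> [[|k]]; first by move=> [->].
rewrite iterSr /=; case: (p v) => //= e; by rewrite iter_None in e.
Qed.

Definition lcov (P : fposet) (x y : fp_car P) : bool :=
  [&& fp_le y x, y != x &
      [forall z, (fp_le y z && fp_le z x) ==> (z == y) || (z == x)]].

Definition JIb (P : fposet) (x : fp_car P) : bool := #|[set y | lcov x y]| == 1.

Definition JIP (P : fposet) : fposet :=
  @FPoset {x : fp_car P | JIb x} (fun a b => fp_le (val a) (val b)).

Lemma iso_inj_surj (P Q : fposet) (f : fp_car P -> fp_car Q) :
  injective f -> (forall y, exists x, f x = y) ->
  (forall x y, fp_le x y = fp_le (f x) (f y)) -> fposet_iso P Q.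
Proof.
move=> inj surj hle; exists f; split=> //; apply: (inj_card_bij inj).
rewrite -(card_codom inj); apply: subset_leq_card; apply/subsetP=> y _.
by have [x <-] := surj y; exact: codom_f.
Qed.

Lemma iso_JI (P Q : fposet) : fposet_iso P Q -> fposet_iso (JIP P) (JIP Q).
Proof.
case=> f [[g fg gf] hf].
have lcf : forall x y, lcov (f x) (f y) = lcov x y.
  move=> x y; rewrite /lcov -!hf (inj_eq (can_inj fg)); congr [&& _, _ & _].
  apply/forallP/forallP => h z.
    by have := h (f z); rewrite -!hf !(inj_eq (can_inj fg)).
  by have := h (g z); rewrite -[z]gf -!hf !(inj_eq (can_inj fg)) !gf.
have JIf : forall x, JIb (f x) = JIb x.
  move=> x; rewrite /JIb.
  have -> : [set y | lcov (f x) y] = f @: [set y | lcov x y].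
    apply/setP=> y; rewrite inE -[y]gf lcf mem_imset ?inE //; exact: can_inj fg.
  by rewrite card_imset //; exact: can_inj fg.
have JIg : forall y, JIb (g y) = JIb y by move=> y; rewrite -JIf gf.
have Fp : forall a : fp_car (JIP P), JIb (f (val a)) by move=> [a ha]; rewrite JIf.
have Gp : forall a : fp_car (JIP Q), JIb (g (val a)) by move=> [a ha]; rewrite JIg.
apply: (@iso_of (JIP P) (JIP Q) (fun a => exist (@JIb Q) _ (Fp a)) (fun a => exist (@JIb P) _ (Gp a))).
- by move=> [a ha]; apply: val_inj => /=; rewrite fg.
- by move=> [a ha]; apply: val_inj => /=; rewrite gf.
- by move=> [a ha] [b hb] /=; rewrite hf.
Qed.

(** ** join-irreducibles of the lattice of closed sets *)
Lemma sigeqE (T : eqType) (P : pred T) a b (ha : P a) (hb : P b) :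
  (exist P a ha == exist P b hb) = (a == b).
Proof. by []. Qed.

Definition topb (V : finType) (p : V -> option V) (S : {set V}) (m : V) : bool :=
  (m \in S) && (if p m is Some q then q \notin S else true).

Lemma closed_remove (V : finType) (p : V -> option V) (S : {set V}) m :
  closedb p S -> topb p S m -> closedb p (S :\ m).
Proof.
move=> /closedP [h1 h2] /andP [mS tm]; apply/closedP; split.
  by move=> i; rewrite !inE => /andP [_ /h1].
move=> i q e; rewrite !inE => /andP [qm qS]; rewrite (h2 i q e qS) andbT.
by apply/eqP=> im; subst i; rewrite e qS in tm.
Qed.

Lemma closed_reach (V : finType) (p : V -> option V) (S : {set V}) v m :
  closedb p S -> reach p v m -> m \in S -> v \in S.
Proof.
move=> /closedP [_ h2] [k]; elim: k v => [|k IH] v; first by case=> ->.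
rewrite iterSr /=; case e: (p v) => [q|] /=; last by rewrite iter_None.
move=> hk mS; exact: h2 e (IH q hk mS).
Qed.

Lemma lcov_DL (V : finType) (p : V -> option V) (S T : fp_car (DL p)) : fforest p ->
  lcov S T <-> exists2 m, topb p (val S) m & val T = val S :\ m.
Proof.
move=> [N hN]; case: S T => [S hS] [T hT] /=; split.
  case/and3P => /= TS nTS /forallP hz.
  have [x xST] : exists x, x \in S :\: T.
    apply/set0Pn; apply: contra nTS; rewrite setD_eq0 => ST.
    by rewrite sigeqE /= eqEsubset TS ST.
  have [y [Qy _ hy]] := @climb _ _ (fun v => v \in S :\: T) _ _ (hN x) xST.
  move: Qy; rewrite inE => /andP [yT yS].
  have ytop : topb p S y.
    rewrite /topb yS /=; case e: (p y) => [q|] //; apply/negP=> qS.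
    move: (hy q e); rewrite inE qS andbT negbK => qT.
    by have /closedP [_ h2] := hT; rewrite (h2 y q e qT) in yT.
  exists y => //.
  have hR := closed_remove hS ytop.
  move: (hz (exist (closedb p) _ hR)); rewrite !sigeqE /= subD1set andbT.
  have -> : T \subset S :\ y.
    apply/subsetP=> t tT; rewrite !inE (subsetP TS t tT) andbT.
    by apply/eqP=> ty; subst t; rewrite tT in yT.
  move=> /orP [/eqP e|/eqP e]; first by rewrite e.
  by have := setD11 y S; rewrite e yS.
case=> m mtop eT; subst T; move: (mtop) => /andP [mS _].
apply/and3P; split => /=; first exact: subD1set.
  by rewrite sigeqE /=; apply/eqP=> e; have := setD11 m S; rewrite e mS.
apply/forallP=> [[Z hZ]]; rewrite !sigeqE /=; apply/implyP=> /andP [s1 s2].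
case mZ: (m \in Z).
  apply/orP; right; rewrite eqEsubset s2 /=; apply/subsetP=> v vS.
  case: (v =P m) => [->//|/eqP vm]; apply: (subsetP s1); by rewrite !inE vm.
apply/orP; left; rewrite eqEsubset s1 andbT; apply/subsetP=> v vZ.
rewrite !inE (subsetP s2 v vZ) andbT; by apply/eqP=> e; subst v; rewrite vZ in mZ.
Qed.

Lemma JI_top (V : finType) (p : V -> option V) (S : fp_car (DL p)) : fforest p ->
  JIb S -> exists m, topb p (val S) m /\ forall m', topb p (val S) m' -> m' = m.
Proof.
move=> fp /cards1P [T0 e].
have : T0 \in [set y | lcov S y] by rewrite e set11.
rewrite inE => /(lcov_DL _ _ fp) [m mtop eT0].
exists m; split=> // m' m'top.
have hR := closed_remove (valP S) m'top.
have : exist (closedb p) _ hR \in [set y | lcov S y].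
  rewrite inE; apply/(lcov_DL _ _ fp); by exists m'.
rewrite e inE -val_eqE /= eT0 => /eqP eq.
move: m'top => /andP [m'S _]; case: (m' =P m) => // /eqP nm.
move/andP: mtop => [mS _].
have : m' \in val S :\ m by rewrite !inE nm.
by rewrite -eq setD11.
Qed.

Lemma top_JI (V : finType) (p : V -> option V) (S : fp_car (DL p)) m : fforest p ->
  topb p (val S) m -> (forall m', topb p (val S) m' -> m' = m) -> JIb S.
Proof.
move=> fp mtop uniq; apply/cards1P.
exists (exist (closedb p) _ (closed_remove (valP S) mtop)); apply/setP=> T; rewrite !inE.
apply/idP/idP => [/(lcov_DL _ _ fp) [m' m'top e]|/eqP ->].
  by rewrite -val_eqE /= e (uniq _ m'top).
by apply/(lcov_DL _ _ fp); exists m.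
Qed.

Definition NRP (V : finType) (p : V -> option V) : fposet :=
  @FPoset {v : V | p v != None} (fun a b => val a \in down p (val b)).

Lemma no_self (V : finType) (p : V -> option V) x : fforest p -> p x = Some x -> False.
Proof.
move=> [N hN] e; have : iter N (obind p) (Some x) = Some x.
  by elim: N {hN} => //= N ->; rewrite /= e.
by rewrite hN.
Qed.

Lemma closed_down (V : finType) (p : V -> option V) m : fforest p -> p m != None ->
  closedb p (down p m).
Proof.
move=> fp hm; apply/closedP; split.
  by move=> i /(downP _ _ fp) h; exact: reach_nonroot h hm.
move=> i q e /(downP _ _ fp) h; apply/(downP _ _ fp); exact: reach_trans (reach_par e) h.
Qed.

Lemma topb_down (V : finType) (p : V -> option V) m m' : fforest p -> p m != None ->
  topb p (down p m) m' = (m' == m).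
Proof.
move=> fp hm; apply/idP/eqP => [/andP [/(downP _ _ fp) h t]|->].
  case: (reach_inv h) => // [[q e hq]].
  by rewrite e in t; move/negP: t; case; apply/(downP _ _ fp).
rewrite /topb; apply/andP; split; first by apply/(downP _ _ fp); exact: reach_refl.
case e: (p m) => [q|] //; apply/negP => /(downP _ _ fp) h.
have qm := reach_antisym fp h (reach_par e); subst q; exact: no_self fp e.
Qed.

Lemma JI_down (V : finType) (p : V -> option V) (a : fp_car (NRP p)) (fp : fforest p) :
  JIb (exist (closedb p) _ (closed_down fp (valP a)) : fp_car (DL p)).
Proof.
have ha : p (val a) != None := valP a.
apply: (top_JI (m := val a)) => //=; first by rewrite topb_down ?eqxx.
by move=> m'; rewrite topb_down // => /eqP.
Qed.

Lemma NRP_JI (V : finType) (p : V -> option V) : fforest p ->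
  fposet_iso (NRP p) (JIP (DL p)).
Proof.
move=> fp.
apply: (@iso_inj_surj (NRP p) (JIP (DL p))
  (fun a => exist (@JIb (DL p)) _ (JI_down a fp))).
- move=> a b e; have := congr1 (fun x => val (val x)) e => /= de.
  apply: val_inj; apply: (reach_antisym fp).
    by apply/(downP _ _ fp); rewrite -de; apply/(downP _ _ fp); exact: reach_refl.
  by apply/(downP _ _ fp); rewrite de; apply/(downP _ _ fp); exact: reach_refl.
- move=> [[S hS] hJ].
  have [m [mtop uniq]] := JI_top fp hJ.
  move: (mtop) => /andP [/= mS _].
  have hm : p m != None by move/closedP: (hS) => [h1 _]; exact: h1.
  exists (exist _ m hm); apply: val_inj; apply: val_inj => /=.
  apply/setP=> v; apply/idP/idP => [/(downP _ _ fp) h|vS].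
    exact: closed_reach hS h mS.
  have [N hN] := fp.
  have [y [yS ry hy]] := @climb _ _ (fun x => x \in S) _ _ (hN v) vS.
  have ytop : topb p S y.
    by rewrite /topb yS; case e: (p y) => [q|] //; exact: hy.
  by rewrite -(uniq _ ytop); apply/(downP _ _ fp).
- move=> a b /=; apply/idP/idP => [h|/subsetP h].
    apply/subsetP=> v /(downP _ _ fp) hv; apply/(downP _ _ fp).
    exact: reach_trans hv ((proj1 (downP _ _ fp)) h).
  by apply: h; apply/(downP _ _ fp); exact: reach_refl.
Qed.

Lemma NRP_iso (V W : finType) (p : V -> option V) (q : W -> option W) :
  fforest p -> fforest q -> fposet_iso (DL p) (DL q) -> fposet_iso (NRP p) (NRP q).
Proof.
move=> fp fq i.
apply: iso_trans (NRP_JI fp) _; apply: iso_trans (iso_JI i) _; exact: iso_sym (NRP_JI fq).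
Qed.

Definition ismax (P : fposet) (a : fp_car P) : Prop := forall b, fp_le a b -> b = a.
Definition iscov (P : fposet) (a b : fp_car P) : Prop :=
  [/\ fp_le a b, a <> b & forall z, fp_le a z -> fp_le z b -> z = a \/ z = b].

Lemma ismax_iso (P Q : fposet) (f : fp_car P -> fp_car Q) (g : fp_car Q -> fp_car P) :
  cancel f g -> cancel g f -> (forall x y, fp_le x y = fp_le (f x) (f y)) ->
  forall a, ismax a -> ismax (f a).
Proof.
move=> fg gf hf a ha b; rewrite -[b]gf -hf => /ha ->; by [].
Qed.

Lemma iscov_iso (P Q : fposet) (f : fp_car P -> fp_car Q) (g : fp_car Q -> fp_car P) :
  cancel f g -> cancel g f -> (forall x y, fp_le x y = fp_le (f x) (f y)) ->
  forall a b, iscov a b -> iscov (f a) (f b).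
Proof.
move=> fg gf hf a b [l n h]; split.
- by rewrite -hf.
- by move=> e; apply: n; rewrite -(fg a) e fg.
- move=> z; rewrite -[z]gf -!hf => h1 h2.
  by case: (h _ h1 h2) => ->; [left|right].
Qed.

Lemma NRP_le (V : finType) (p : V -> option V) (a b : fp_car (NRP p)) : fforest p ->
  fp_le a b <-> reach p (val a) (val b).
Proof. by move=> fp; exact: downP. Qed.

Lemma ismax_NRP (V : finType) (p : V -> option V) (a : fp_car (NRP p)) : fforest p ->
  ismax a <-> (forall q, p (val a) = Some q -> p q = None).
Proof.
move=> fp; split.
  move=> h q e; case eq: (p q) => [w|] //; exfalso.
  have hq : p q != None by rewrite eq.
  have := h (exist _ q hq) ((proj2 (NRP_le a (exist _ q hq) fp)) (reach_par e)).
  move/(congr1 val) => /= qa; rewrite qa in e; exact: no_self fp e.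
move=> h b /(NRP_le _ _ fp) r; apply: val_inj.
case: (reach_inv r) => [//|[q e rq]].
case: (reach_inv rq) => [qb|[w e2 _]]; last by rewrite (h q e) in e2.
by move: (valP b); rewrite -qb (h q e).
Qed.

Lemma iscov_NRP (V : finType) (p : V -> option V) (a b : fp_car (NRP p)) : fforest p ->
  iscov a b <-> p (val a) = Some (val b).
Proof.
move=> fp; split.
  move=> [/(NRP_le _ _ fp) r n h].
  case: (reach_inv r) => [e|[q e rq]]; first by case: n; apply: val_inj.
  have hq : p q != None by exact: reach_nonroot rq (valP b).
  have := h (exist _ q hq) ((proj2 (NRP_le a (exist _ q hq) fp)) (reach_par e)) ((proj2 (NRP_le (exist _ q hq) b fp)) rq).
  case=> /(congr1 val) /= qe; last by rewrite qe in e.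
  by rewrite qe in e; case: (no_self fp e).
move=> e; split.
- by apply/(NRP_le _ _ fp); exact: reach_par.
- by move=> ab; rewrite ab in e; exact: no_self fp e.
- move=> z /(NRP_le _ _ fp) r1 /(NRP_le _ _ fp) r2.
  case: (reach_inv r1) => [az|[q e' rq]]; first by left; apply: val_inj.
  rewrite e in e'; case: e' => qb; subst q.
  by right; apply: val_inj; exact: reach_antisym fp r2 rq.
Qed.

Lemma FP_iter (us : seq rtree) (i : 'I_(size us)) (x : FT i) k :
  iter k (obind (@FP us)) (Some (Tagged (@FT us) x)) =
  omap (Tagged (@FT us)) (iter k (obind (rt_par (nth dummy_tree us i))) (Some x)).
Proof.
elim: k => [//|k IH]; rewrite iterS IH iterS.
by case: (iter k _ _).
Qed.

Lemma FV_forest (us : seq rtree) : all is_rtree us -> fforest (@FP us).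
Proof.
move=> h; exists #|FV us| => [[i x]].
apply: (@iter_card _ _ _ (rt_n (nth dummy_tree us i))).
have : is_rtree (nth dummy_tree us i) by move/(all_nthP dummy_tree): h => h; exact: h _ (ltn_ord i).
move=> /andP [/forallP /(_ x) /eqP hf _].
by rewrite FP_iter hf.
Qed.

Lemma reach_FV (us : seq rtree) (i : 'I_(size us)) (x : FT i) w :
  reach (@FP us) (Tagged (@FT us) x) w ->
  exists2 y, w = Tagged (@FT us) y & reach (rt_par (nth dummy_tree us i)) x y.
Proof.
move=> [k]; rewrite FP_iter; case e: (iter k _ _) => [y|] //= [<-].
by exists y => //; exists k.
Qed.

Lemma reach_lift (us : seq rtree) (i : 'I_(size us)) (x y : FT i) :
  reach (rt_par (nth dummy_tree us i)) x y ->
  reach (@FP us) (Tagged (@FT us) x) (Tagged (@FT us) y).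
Proof. by move=> [k e]; exists k; rewrite FP_iter e. Qed.

Lemma tagged_asK (I : eqType) (T_ : I -> Type) (u w : {i : I & T_ i}) :
  tag w = tag u -> Tagged T_ (tagged_as u w) = w.
Proof.
case: u => i x; case: w => j y /= e; subst j.
by rewrite tagged_asE.
Qed.

Definition rcfacts (u : rtree) (r c : 'I_(rt_n u)) : Prop :=
  [/\ rt_par u r = None, (forall v, rt_par u v = None -> v = r),
      rt_par u c = Some r, (forall v, rt_par u v = Some r -> v = c) &
      (forall v, rt_par u v != None -> reach (rt_par u) v c)].
Arguments rcfacts : clear implicits.

Lemma rv1_facts (u : rtree) : is_rtree u -> root_valence1 u ->
  exists rc : 'I_(rt_n u) * 'I_(rt_n u), rcfacts u rc.1 rc.2.
Proof.
move=> /andP [hf hr] /existsP [r /andP [/eqP hr0 /cards1P [c ec]]].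
have [r' er] := cards1P hr.
have rootE : forall v, (rt_par u v == None) = (v == r').
  by move=> v; rewrite -in_set1 -er inE.
have rr' : r = r' by apply/eqP; rewrite -rootE hr0.
subst r'.
have childE : forall v, (rt_par u v == Some r) = (v == c).
  by move=> v; rewrite -in_set1 -ec inE.
have hc : rt_par u c = Some r by apply/eqP; rewrite childE.
exists (r, c); split=> //=.
- by move=> v /eqP; rewrite rootE => /eqP.
- by move=> v /eqP; rewrite childE => /eqP.
- move=> v nv.
  have fN : iter (rt_n u) (obind (rt_par u)) (Some v) = None by move/forallP: hf => /(_ v) /eqP.
  have [y [ny ry top]] := @climb _ _ (fun j => rt_par u j != None) _ _ fN nv.
  move: ny; case ey: (rt_par u y) => [q|] // _.
  have := top q ey; rewrite negbK rootE => /eqP qr; subst q.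
  have yc : y = c by apply/eqP; rewrite -childE ey.
  by subst y; case: ry => k hk; exists k.
Qed.

Lemma nrE (ws : seq rtree) (i : 'I_(size ws)) (x : FT i) :
  (@FP ws (Tagged (@FT ws) x) != None) = (rt_par (nth dummy_tree ws i) x != None).
Proof. by rewrite /FP /=; case: (rt_par _ x). Qed.

Lemma max_FV (ws : seq rtree) (r c : forall i : 'I_(size ws), FT i) :
  all is_rtree ws -> (forall i, rcfacts _ (r i) (c i)) ->
  forall a : fp_car (NRP (@FP ws)), ismax a <-> exists i, val a = Tagged (@FT ws) (c i).
Proof.
move=> hw F a; apply: iff_trans (ismax_NRP a (FV_forest hw)) _.
case: a => [[i x] /= hx]; split.
  move=> h; exists i; congr Tagged.
  have [_ hroot _ hchild _] := F i.
  move: hx; rewrite nrE; case e: (rt_par _ x) => [y|] // _.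
  have := h (Tagged (@FT ws) y); rewrite /FP /= e => /(_ erefl).
  case ey: (rt_par _ y) => //= _; rewrite (hroot _ ey) in e; exact: hchild e.
case=> j e; have ij : i = j by have := congr1 tag e.
subst j; have := tagged_inj e => ->.
have [hr0 _ hc _ _] := F i.
by move=> q; rewrite /FP /= hc /= => -[<-]; rewrite /FP /= hr0.
Qed.

Lemma le_C (ws : seq rtree) (r c : forall i : 'I_(size ws), FT i) :
  all is_rtree ws -> (forall i, rcfacts _ (r i) (c i)) ->
  forall (a b : fp_car (NRP (@FP ws))) i, val a = Tagged (@FT ws) (c i) ->
  fp_le b a <-> tag (val b) = i.
Proof.
move=> hw F a b i ea; split.
  move/(NRP_le _ _ (FV_forest hw)); rewrite ea; case: b => [[j y] /= _].
  by move=> /reach_FV [z] /(congr1 tag).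
move=> bi; apply/(NRP_le b a (FV_forest hw)); rewrite ea.
case: b bi => [[j y] hy] /= ji; subst j.
apply: reach_lift; have [_ _ _ _ h] := F i; apply: h; by rewrite -nrE.
Qed.

Lemma all_nth_rt (ws : seq rtree) (P : rtree -> bool) (i : 'I_(size ws)) :
  all P ws -> P (nth dummy_tree ws i).
Proof. by move/(all_nthP dummy_tree) => h; exact: h _ (ltn_ord i). Qed.

Lemma part2 (us vs : seq rtree) :
  all is_rtree us -> all root_valence1 us -> all is_rtree vs -> all root_valence1 vs ->
  fposet_iso (prod_ival us) (prod_ival vs) ->
  exists f : 'I_(size us) -> 'I_(size vs), bijective f /\
    forall i : 'I_(size us), tree_iso (nth dummy_tree us i) (nth dummy_tree vs (f i)).
Proof.
move=> hu hu1 hv hv1 iso.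
have forest_of : forall ws, all is_rtree ws -> all (fun t => is_forest (rt_par t)) ws.
  by move=> ws; elim: ws => //= w ws IH /andP [/andP [-> _] /IH].
have fu := FV_forest hu; have fv := FV_forest hv.
have isoDL : fposet_iso (DL (@FP us)) (DL (@FP vs)).
  apply: iso_trans (iso_sym (prod_DL (forest_of _ hu))) _.
  exact: iso_trans iso (prod_DL (forest_of _ hv)).
have [psi [[psi' pp' p'p] hpsi]] := NRP_iso fu fv isoDL.
have hpsi' : forall x y, fp_le x y = fp_le (psi' x) (psi' y) by move=> x y; rewrite hpsi !p'p.
have Hu : forall i : 'I_(size us), {rc : FT i * FT i | rcfacts _ rc.1 rc.2}.
  move=> i; apply: constructive_indefinite_description.
  by apply: rv1_facts; apply: all_nth_rt.
have Hv : forall i : 'I_(size vs), {rc : FT i * FT i | rcfacts _ rc.1 rc.2}.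
  move=> i; apply: constructive_indefinite_description.
  by apply: rv1_facts; apply: all_nth_rt.
pose ru i := (sval (Hu i)).1; pose cu i := (sval (Hu i)).2.
pose rv i := (sval (Hv i)).1; pose cv i := (sval (Hv i)).2.
have Fu : forall i, rcfacts _ (ru i) (cu i) := fun i => svalP (Hu i).
have Fv : forall i, rcfacts _ (rv i) (cv i) := fun i => svalP (Hv i).
have cu_nr : forall i, @FP us (Tagged (@FT us) (cu i)) != None.
  by move=> i; rewrite nrE; have [_ _ -> _ _] := Fu i.
have cv_nr : forall i, @FP vs (Tagged (@FT vs) (cv i)) != None.
  by move=> i; rewrite nrE; have [_ _ -> _ _] := Fv i.
pose Cu i : fp_car (NRP (@FP us)) := exist (fun v => @FP us v != None) _ (cu_nr i).
pose Cv i : fp_car (NRP (@FP vs)) := exist (fun v => @FP vs v != None) _ (cv_nr i).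
have maxu := max_FV hu Fu; have maxv := max_FV hv Fv.
pose f i := tag (val (psi (Cu i))).
pose g j := tag (val (psi' (Cv j))).
have psiC : forall i, psi (Cu i) = Cv (f i).
  move=> i; have : ismax (psi (Cu i)).
    apply: (ismax_iso pp' p'p hpsi); apply/maxu; by exists i.
  move/maxv => [j e]; apply: val_inj; rewrite e /f e.
  by [].
have psi'C : forall j, psi' (Cv j) = Cu (g j).
  move=> j; have : ismax (psi' (Cv j)).
    apply: (ismax_iso p'p pp' hpsi'); apply/maxv; by exists j.
  move/maxu => [i e]; apply: val_inj; rewrite e /g e.
  by [].
have tagpsi : forall (a : fp_car (NRP (@FP us))) i, tag (val a) = i -> tag (val (psi a)) = f i.
  move=> a i ai.
  have : fp_le a (Cu i) by apply/(le_C hu Fu (a := Cu i)).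
  rewrite hpsi psiC => /(le_C hv Fv (a := Cv (f i))); by apply.
have tagpsi' : forall (a : fp_car (NRP (@FP vs))) j, tag (val a) = j -> tag (val (psi' a)) = g j.
  move=> a j aj.
  have : fp_le a (Cv j) by apply/(le_C hv Fv (a := Cv j)).
  rewrite hpsi' psi'C => /(le_C hu Fu (a := Cu (g j))); by apply.
exists f; split.
  apply: (@Bijective _ _ f g) => [i|j].
    by rewrite /g -psiC pp'.
  by rewrite /f -psi'C p'p.
move=> i; set j := f i.
pose F (x : FT i) : FT j :=
  if (insub (Tagged (@FT us) x) : option {v : FV us | @FP us v != None}) is Some s
  then tagged_as (Tagged (@FT vs) (cv j)) (val (psi s)) else rv j.
pose G (y : FT j) : FT i :=
  if (insub (Tagged (@FT vs) y) : option {v : FV vs | @FP vs v != None}) is Some s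
  then tagged_as (Tagged (@FT us) (cu i)) (val (psi' s)) else ru i.
have FE : forall x (s : {v : FV us | @FP us v != None}), val s = Tagged (@FT us) x ->
    Tagged (@FT vs) (F x) = val (psi s).
  move=> x s es.
  have ht : tag (val (psi s)) = tag (Tagged (@FT vs) (cv j)) by apply: tagpsi; rewrite es.
  have := tagged_asK ht; rewrite /F -es valK /=; exact.
have FE0 : forall x, rt_par (nth dummy_tree us i) x = None -> F x = rv j.
  by move=> x e; rewrite /F insubF // nrE e.
have GE : forall y (s : {v : FV vs | @FP vs v != None}), val s = Tagged (@FT vs) y ->
    Tagged (@FT us) (G y) = val (psi' s).
  move=> y s es.
  have ij : g j = i by rewrite /j /g -psiC pp'.
  have ht : tag (val (psi' s)) = tag (Tagged (@FT us) (cu i)) by rewrite -ij; apply: tagpsi'; rewrite es.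
  have := tagged_asK ht; rewrite /G -es valK /=; exact.
have GE0 : forall y, rt_par (nth dummy_tree vs j) y = None -> G y = ru i.
  by move=> y e; rewrite /G insubF // nrE e.
have [hur0 hurt huc huch _] := Fu i; have [hvr0 hvrt hvc hvch _] := Fv j.
exists F; split.
  apply: (@Bijective _ _ F G) => [x|y].
    case ex: (rt_par _ x) => [q|].
      have hx : @FP us (Tagged (@FT us) x) != None by rewrite nrE ex.
      pose s : {v : FV us | @FP us v != None} := exist (fun v => @FP us v != None) _ hx.
      have e1 := FE x s erefl.
      have hy : @FP vs (Tagged (@FT vs) (F x)) != None by rewrite e1; exact: (valP (psi s)).
      pose s' : {v : FV vs | @FP vs v != None} := exist (fun v => @FP vs v != None) _ hy.
      have e2 := GE (F x) s' erefl.
      have ss : s' = psi s by apply: val_inj; rewrite /= e1.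
      by apply: (@tagged_inj _ (@FT us)); rewrite e2 ss pp'.
    by rewrite (FE0 x ex) (GE0 _ hvr0) (hurt x ex).
  case ey: (rt_par _ y) => [q|].
    have hy : @FP vs (Tagged (@FT vs) y) != None by rewrite nrE ey.
    pose s : {v : FV vs | @FP vs v != None} := exist (fun v => @FP vs v != None) _ hy.
    have e1 := GE y s erefl.
    have hx : @FP us (Tagged (@FT us) (G y)) != None by rewrite e1; exact: (valP (psi' s)).
    pose s' : {v : FV us | @FP us v != None} := exist (fun v => @FP us v != None) _ hx.
    have e2 := FE (G y) s' erefl.
    have ss : s' = psi' s by apply: val_inj; rewrite /= e1.
    by apply: (@tagged_inj _ (@FT vs)); rewrite e2 ss p'p.
  by rewrite (GE0 y ey) (FE0 _ hur0) (hvrt y ey).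
move=> x; case ex: (rt_par _ x) => [q|] /=; last by rewrite (FE0 x ex) hvr0.
have hx : @FP us (Tagged (@FT us) x) != None by rewrite nrE ex.
pose s : {v : FV us | @FP us v != None} := exist (fun v => @FP us v != None) _ hx.
have e1 := FE x s erefl.
case: (q =P ru i) => [qr|/eqP qr].
  subst q; have xc := huch x ex; subst x.
  have sC : s = Cu i by apply: val_inj.
  rewrite (FE0 _ hur0); move: e1; rewrite sC psiC /= => e1.
  by rewrite (tagged_inj e1) hvc.
have hq : @FP us (Tagged (@FT us) q) != None.
  rewrite nrE; apply/negP => /eqP /hurt e; by rewrite e eqxx in qr.
pose sq : {v : FV us | @FP us v != None} := exist (fun v => @FP us v != None) _ hq.
have eq := FE q sq erefl.
have cov : iscov (s : fp_car (NRP (@FP us))) sq.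
  by apply/(iscov_NRP _ _ fu); rewrite /= /FP /= ex.
have := iscov_iso pp' p'p hpsi cov => /(iscov_NRP _ _ fv).
rewrite -e1 -eq /FP /=; case: (rt_par _ (F x)) => [z|] //= [e].
by rewrite (tagged_inj e).
Qed.

Theorem proposition6p8 :
  (* every basis element F_[Q] is a monomial in the F_[t], t of root-valence 1 *)
  (forall ts : seq rtree, all is_rtree ts ->
     exists us : seq rtree,
       [/\ all is_rtree us, all root_valence1 us &
           fposet_iso (prod_ival ts) (prod_ival us)])
  /\
  (* distinct monomials (multisets of unlabeled root-valence-1 trees) give
     distinct basis elements *)
  (forall us vs : seq rtree,
     all is_rtree us -> all root_valence1 us ->
     all is_rtree vs -> all root_valence1 vs ->
     fposet_iso (prod_ival us) (prod_ival vs) ->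
     exists f : 'I_(size us) -> 'I_(size vs),
       bijective f /\
       forall i : 'I_(size us), tree_iso (nth dummy_tree us i) (nth dummy_tree vs (f i))).
Proof.
split; [exact: part1 | exact: part2].
Qed.
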